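(* Let $r:\mathcal T\to\mathbb N\cup\{0\}$ be a function satisfying: (1) $r(\mathscr X)=0$ iff $\mathscr X=\mathbf 0$, and $r(\mathscr X)=1$ iff $\mathscr X$ is a rank-one tensor; (2) $r$ is constant on equivalence classes of $\sim$; (3) if $\mathscr X\in\mathbb R^{I_1\times\cdots\times I_N}$ has exactly two modes $n_1<n_2$ with $I_{n_1}>1$ and $I_{n_2}>1$, and $\mathbf X\in\mathbb R^{I_{n_1}\times I_{n_2}}$ is the matrix associated to $\mathscr X$, then $r(\mathscr X)=\operatorname{rank}(\mathbf X)$; (4) if $\mathscr X\in\mathbb R^{I_1\times\cdots\times I_N}$ is nonzero, not rank-one, and has at least three modes $n$ with $I_n>1$, then $r(\mathscr X)=\max\{I_1,\dots,I_N\}$. Then $r$ is a QZC rank function.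
   Context: $\mathcal T$ is the collection of all real tensors (of all orders $N\ge1$ and all sizes). A rank-one tensor is one of the form $x_{i_1\cdots i_N}=a^{(1)}_{i_1}\cdots a^{(N)}_{i_N}$ with all $\mathbf a^{(n)}$ nonzero vectors. $\mathscr I_{M,N}$ is the order-$N$ tensor of size $M\times\cdots\times M$ with $1$ in positions $(i,\dots,i)$ and $0$ elsewhere. A subtensor of $\mathscr X\in\mathbb R^{I_1\times\cdots\times I_N}$ is a tensor $\mathscr Y\in\mathbb R^{J_1\times\cdots\times J_N}$ with $y_{j_1\cdots j_N}=x_{i_{1j_1}\cdots i_{Nj_N}}$ for some indices $1\le i_{n1}<\cdots<i_{nJ_n}\le I_n$. For $\pi\in S_N$, the mode-permutation of $\mathscr X$ is the tensor $\mathscr Y$ with $y_{i_1\cdots i_N}=x_{i_{\pi(1)}\cdots i_{\pi(N)}}$. The relation $\sim$ is the smallest equivalence relation on $\mathcal T$ with $\mathscr X\sim\alpha\mathscr X$ for all $\alpha\in\mathbb R\setminus\{0\}$ and $\mathscr X\sim\mathscr Y$ whenever $\mathscr Y$ is a mode-permutation of $\mathscr X$. A QZC rank function is a function $s:\mathcal T\to\mathbb N\cup\{0\}$ such that: (QZC1) $s(\mathscr X)=0$ iff $\mathscr X=\mathbf 0$, and $s(\mathscr X)=1$ iff $\mathscr X$ is rank-one; (QZC2) $s(\mathscr I_{M,N})=M$ whenever $N\ge2$; (QZC3) if $\mathscr X\in\mathbb R^{I_1\times I_2\times1\times\cdots\times1}$ then $s(\mathscr X)$ equals the rank of the corresponding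 $I_1\times I_2$ matrix; (QZC4) $s(\alpha\mathscr X)=s(\mathscr X)$ for $\alpha\ne0$; (QZC5) $s$ is invariant under mode-permutations; (QZC6) $s(\mathscr Y)\le s(\mathscr X)$ whenever $\mathscr Y$ is a subtensor of $\mathscr X$. *)

(* Defs.v *)
From mathcomp Require Import all_boot all_algebra all_fingroup.
From mathcomp Require Import reals.
Set Implicit Arguments. Unset Strict Implicit. Unset Printing Implicit Defensive.
Import GRing.Theory Num.Theory.
Local Open Scope ring_scope.

(* Multi-indices of a tensor with size list s (order = size s), 0-based. *)
Definition tidx (s : seq nat) :=
  {dffun forall n : 'I_(size s), 'I_(nth 0%N s n)}.

Record tensor (R : realType) := Tensor {
  tsz : seq nat;
  tval : {ffun tidx tsz -> R};
  tszP : (0 < size tsz)%N && all (leq 1) tsz }.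

Section Defs.
Variable R : realType.
Implicit Types X Y : tensor R.

Definition tord X : nat := size (tsz X).
Definition tdim X (n : nat) : nat := nth 0%N (tsz X) n.

(* entry at a nat-valued multi-index f (0-based); 0 if out of bounds *)
Definition tentry X (f : nat -> nat) : R :=
  if [pick i : tidx (tsz X) | [forall n, nat_of_ord (i n) == f (nat_of_ord n)]]
  is Some i then tval X i else 0.

Definition inbounds X (f : nat -> nat) : Prop :=
  forall n, (n < tord X)%N -> (f n < tdim X n)%N.

Definition is_zero_tensor X : Prop := forall i, tval X i = 0.

Definition is_rank_one X : Prop :=
  exists a : nat -> nat -> R,
    (forall n, (n < tord X)%N -> exists2 k, (k < tdim X n)%N & a n k != 0) /\
    (forall i, tval X i = \prod_(n < size (tsz X)) a n (nat_of_ord (i n))).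

Definition is_scaling (alpha : R) X Y : Prop :=
  tsz Y = tsz X /\ forall f, tentry Y f = alpha * tentry X f.

Definition permnat (N : nat) (p : {perm 'I_N}) (k : nat) : nat :=
  if insub k is Some i then nat_of_ord (p i) else k.

Definition is_modeperm X Y : Prop :=
  exists p : {perm 'I_(tord X)},
    tord Y = tord X /\
    (forall k, (k < tord X)%N -> tdim Y (permnat p k) = tdim X k) /\
    (forall f, tentry Y f = tentry X (fun k => f (permnat p k))).

Inductive tsim : tensor R -> tensor R -> Prop :=
  | tsim_refl X : tsim X X
  | tsim_sym X Y : tsim X Y -> tsim Y X
  | tsim_trans X Y Z : tsim X Y -> tsim Y Z -> tsim X Z
  | tsim_scale X Y alpha : alpha != 0 -> is_scaling alpha X Y -> tsim X Y
  | tsim_perm X Y : is_modeperm X Y -> tsim X Y.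

Definition is_subtensor Y X : Prop :=
  tord Y = tord X /\
  exists sel : nat -> nat -> nat,
    (forall n, (n < tord X)%N ->
       (forall j k, (j < k)%N -> (k < tdim Y n)%N -> (sel n j < sel n k)%N) /\
       (forall j, (j < tdim Y n)%N -> (sel n j < tdim X n)%N)) /\
    (forall f, inbounds Y f -> tentry Y f = tentry X (fun n => sel n (f n))).

Definition is_identity_tensor X (M N : nat) : Prop :=
  tsz X = nseq N M /\
  forall f, inbounds X f ->
    tentry X f = if [forall n : 'I_N, f n == f 0%N] then 1 else 0.

Definition is_QZC (s : tensor R -> nat) : Prop :=
  (forall X, s X = 0%N <-> is_zero_tensor X) /\
  (forall X, s X = 1%N <-> is_rank_one X) /\
  (forall X M N, (2 <= N)%N -> is_identity_tensor X M N -> s X = M) /\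
  (forall X I1 I2 k (A : 'M[R]_(I1, I2)),
     tsz X = [:: I1, I2 & nseq k 1%N] ->
     (forall (i : 'I_I1) (j : 'I_I2),
        A i j = tentry X (fun n => if n == 0%N then nat_of_ord i
                                   else if n == 1%N then nat_of_ord j else 0%N)) ->
     s X = \rank A) /\
  (forall X Y alpha, alpha != 0 -> is_scaling alpha X Y -> s Y = s X) /\
  (forall X Y, is_modeperm X Y -> s Y = s X) /\
  (forall X Y, is_subtensor Y X -> (s Y <= s X)%N).

End Defs.

(* Main.v *)
Require Import Defs.
From mathcomp Require Import all_boot all_algebra all_fingroup.
From mathcomp Require Import reals.
From Stdlib Require Import Classical.
Import GRing.Theory Num.Theory.
Set Implicit Arguments. Unset Strict Implicit. Unset Printing Implicit Defensive.
Local Open Scope ring_scope.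

Arguments tentry : simpl never.
Section Aux.
Variable R : realType.
Implicit Types X Y : tensor R.

Definition ifun (s : seq nat) (i : tidx s) : nat -> nat :=
  fun k => match (insub k : option 'I_(size s)) with
           | Some n => nat_of_ord (i n) | None => 0%N end.

Lemma ifunE s (i : tidx s) (n : 'I_(size s)) : ifun i n = i n.
Proof. by rewrite /ifun valK. Qed.

Lemma tentry_ext X f g : (forall n, (n < tord X)%N -> f n = g n) ->
  tentry X f = tentry X g.
Proof.
move=> E; rewrite /tentry (@eq_pick _ _ [pred i : tidx (tsz X) | [forall n, nat_of_ord (i n) == g (nat_of_ord n)]]) //.
move=> i /=; apply: eq_forallb => n; by rewrite E.
Qed.

Lemma tentry_idx X (i : tidx (tsz X)) : tentry X (ifun i) = Defs.tval X i.
Proof.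
rewrite /tentry; case: pickP => [j /forallP Hj | H].
  congr (Defs.tval X _); apply/ffunP => n; apply/val_inj => /=; move: (Hj n) => /eqP ->; by rewrite ifunE.
move: (H i) => /forallP; case; move=> n; by rewrite ifunE.
Qed.

Lemma tdim_ge1 X n : (n < tord X)%N -> (1 <= tdim X n)%N.
Proof.
move=> Hn; case/andP: (tszP X) => _ /(all_nthP 0%N) H; exact: H.
Qed.

Lemma tord_gt0 X : (0 < tord X)%N.
Proof. by case/andP: (tszP X). Qed.

Lemma inbounds_idx X f : inbounds X f ->
  exists i : tidx (tsz X), forall n, (n < tord X)%N -> ifun i n = f n.
Proof.
move=> Hf.
exists (@finfun _ (fun n : 'I_(size (tsz X)) => 'I_(nth 0%N (tsz X) n))
          (fun n => Ordinal (Hf n (ltn_ord n)))).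
move=> n Hn; by rewrite -[n]/(nat_of_ord (Ordinal Hn)) ifunE ffunE.
Qed.

Lemma tentry_inb X f : inbounds X f -> exists i, tentry X f = Defs.tval X i /\
   forall n, (n < tord X)%N -> ifun i n = f n.
Proof.
case/inbounds_idx => i Hi; exists i; split => //.
by rewrite -tentry_idx; apply: tentry_ext => n Hn; rewrite Hi.
Qed.

Lemma ifun_inb X (i : tidx (tsz X)) : inbounds X (ifun i).
Proof. move=> n Hn; by rewrite -[n]/(nat_of_ord (Ordinal Hn)) ifunE. Qed.

Lemma tentry_zero X f : is_zero_tensor X -> tentry X f = 0.
Proof. by move=> Z; rewrite /tentry; case: pickP => // i _; rewrite Z. Qed.

Lemma zeroE X : is_zero_tensor X <-> forall f, inbounds X f -> tentry X f = 0.
Proof.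
split; first by move=> Z f _; exact: tentry_zero.
by move=> H i; rewrite -tentry_idx; apply: H; exact: ifun_inb.
Qed.

Lemma nonzeroE X : ~ is_zero_tensor X -> exists2 f, inbounds X f & tentry X f != 0.
Proof.
move=> NZ; apply: NNPP => C; apply: NZ; apply/zeroE => f Hf.
case: (eqVneq (tentry X f) 0) => // ne; exfalso; apply: C; by exists f.
Qed.

Lemma rank1E X : is_rank_one X <-> exists a : nat -> nat -> R,
    (forall n, (n < tord X)%N -> exists2 k, (k < tdim X n)%N & a n k != 0) /\
    (forall f, inbounds X f -> tentry X f = \prod_(n < tord X) a n (f n)).
Proof.
split; case=> a [Ha Hp]; exists a; split => //.
  move=> f /tentry_inb [i [-> Hi]]; rewrite Hp /tord. apply: eq_big => // n _.
  by rewrite -Hi // -ifunE.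
move=> i; rewrite -tentry_idx Hp; last exact: ifun_inb.
apply: eq_bigr => n _.
by rewrite ifunE.
Qed.


Lemma vec_rank1 X m : (m < tord X)%N ->
  (forall n, (n < tord X)%N -> n != m -> (tdim X n <= 1)%N) ->
  ~ is_zero_tensor X -> is_rank_one X.
Proof.
move=> Hm Hd NZ.
pose em k := fun p => if p == m then k else 0%N.
have key : forall f, inbounds X f -> tentry X f = tentry X (em (f m)).
  move=> f Hf; apply: tentry_ext => p Hp; rewrite /em; case: eqP => [->//|/eqP ne].
  by move: (Hf p Hp) (Hd p Hp ne); case: (f p) => // k a b; have := leq_trans a b; rewrite ltnS ltn0.
apply/rank1E; exists (fun n k => if n == m then tentry X (em k) else 1); split.
  case: (nonzeroE NZ) => f Hf Hnz n Hn; case: eqP => [->|_].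
    by exists (f m); [exact: Hf | rewrite -key].
  by exists 0%N; [exact: tdim_ge1 | exact: oner_neq0].
move=> f Hf; rewrite (bigD1 (Ordinal Hm)) //=.
rewrite big1 ?mulr1; first by rewrite eqxx (key f Hf).
move=> n Hn; have -> : (nat_of_ord n == m) = false.
  by apply/negbTE; apply: contra Hn => /eqP E; apply/eqP/val_inj.
by [].
Qed.


Lemma sel_le (sel : nat -> nat) d D :
  (forall j k, (j < k)%N -> (k < d)%N -> (sel j < sel k)%N) ->
  (forall j, (j < d)%N -> (sel j < D)%N) -> (d <= D)%N.
Proof.
move=> Hinc Hb.
have H : forall j, (j < d)%N -> (j <= sel j)%N.
  elim=> // j IH Hj.
  have := Hinc j j.+1 (ltnSn j) Hj.
  have := IH (ltnW Hj); move=> a b; exact: (leq_ltn_trans a b).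
case: d Hinc Hb H => // d Hinc Hb H.
exact: (leq_ltn_trans (H d (ltnSn d)) (Hb d (ltnSn d))).
Qed.

Lemma sub_dim Y X : is_subtensor Y X ->
  forall n, (n < tord X)%N -> (tdim Y n <= tdim X n)%N.
Proof.
case=> _ [sel [Hs _]] n Hn; case: (Hs n Hn) => H1 H2; exact: sel_le H1 H2.
Qed.

Lemma sub_inb Y X sel : tord Y = tord X ->
  (forall n, (n < tord X)%N -> (forall j, (j < tdim Y n)%N -> (sel n j < tdim X n)%N)) ->
  forall f, inbounds Y f -> inbounds X (fun n => sel n (f n)).
Proof. move=> E Hs f Hf n Hn; apply: Hs => //; apply: Hf; by rewrite E. Qed.

Lemma sub_nonzero Y X : is_subtensor Y X -> ~ is_zero_tensor Y -> ~ is_zero_tensor X.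
Proof.
case=> E [sel [Hs He]] NZ Z; case: (nonzeroE NZ) => f Hf.
by rewrite He // tentry_zero // eqxx.
Qed.

Lemma sub_rank1 Y X : is_subtensor Y X -> ~ is_zero_tensor Y ->
  is_rank_one X -> is_rank_one Y.
Proof.
case=> E [sel [Hs He]] NZ /rank1E [a [Ha Hp]].
have Hs2 : forall n, (n < tord X)%N -> forall j, (j < tdim Y n)%N -> (sel n j < tdim X n)%N.
  by move=> n Hn; case: (Hs n Hn).
have Hq : forall f, inbounds Y f ->
    tentry Y f = \prod_(n < tord Y) a n (sel n (f n)).
  move=> f Hf; rewrite He // Hp; last exact: sub_inb Hs2 f Hf.
  by rewrite E.
apply/rank1E; exists (fun n k => a n (sel n k)); split => //.
case: (nonzeroE NZ) => f Hf; rewrite Hq // => /prodf_neq0 Hnz n Hn.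
exists (f n); first exact: Hf.
exact: (Hnz (Ordinal Hn)).
Qed.

Lemma count_nthE (s : seq nat) (P : pred nat) :
  count P s = (\sum_(i < size s | P (nth 0%N s i)) 1)%N.
Proof. by rewrite -sum1_count (big_nth 0%N) big_mkord. Qed.

Lemma count3 (s : seq nat) (P : pred nat) a b c :
  (a < size s)%N -> (b < size s)%N -> (c < size s)%N ->
  a != b -> a != c -> b != c ->
  P (nth 0%N s a) -> P (nth 0%N s b) -> P (nth 0%N s c) -> (3 <= count P s)%N.
Proof.
move=> Ha Hb Hc ab ac bc Pa Pb Pc; rewrite count_nthE.
rewrite (bigD1 (Ordinal Ha)) //= (bigD1 (Ordinal Hb)) /=; last first.
  by rewrite Pb -(inj_eq val_inj) /= eq_sym ab.
rewrite (bigD1 (Ordinal Hc)) /=; last first.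
  by rewrite Pc -!(inj_eq val_inj) /= eq_sym ac eq_sym bc.
by rewrite !add1n !ltnS.
Qed.

Lemma maxE (s : seq nat) : (\max_(k <- s) k = \max_(i < size s) nth 0%N s i)%N.
Proof. by rewrite (big_nth 0%N) big_mkord. Qed.

Lemma le_max (s : seq nat) n : (n < size s)%N -> (nth 0%N s n <= \max_(k <- s) k)%N.
Proof. move=> Hn; rewrite maxE; exact: (leq_bigmax (Ordinal Hn)). Qed.

Lemma max_mono (s t : seq nat) : size s = size t ->
  (forall n, (n < size s)%N -> (nth 0%N s n <= nth 0%N t n)%N) ->
  (\max_(k <- s) k <= \max_(k <- t) k)%N.
Proof.
move=> E H; rewrite [X in (X <= _)%N]maxE; apply/bigmax_leqP => i _.
apply: leq_trans (H i (ltn_ord i)) _; apply: le_max; by rewrite -E.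
Qed.


Lemma rank_mxsub (F : fieldType) m n m' n' (f : 'I_m' -> 'I_m) (g : 'I_n' -> 'I_n)
  (A : 'M[F]_(m, n)) : (\rank (mxsub f g A) <= \rank A)%N.
Proof.
have -> : mxsub f g A = rowsub f 1%:M *m (A *m colsub g 1%:M).
  by rewrite mul_rowsub_mx mulmx_colsub mulmx1 mul1mx; apply/matrixP => i j; rewrite !mxE.
apply: leq_trans (mxrankM_maxr _ _) _; exact: mxrankM_maxl.
Qed.

Lemma big_other X m : (m < tord X)%N -> ~ is_zero_tensor X -> ~ is_rank_one X ->
  exists n, [/\ (n < tord X)%N, n != m & (1 < tdim X n)%N].
Proof.
move=> Hm NZ NR; apply: NNPP => C; apply: NR; apply: (vec_rank1 Hm) => // n Hn Hne.
rewrite leqNgt; apply/negP => Hb; apply: C; by exists n.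
Qed.

Definition gfun (n1 n2 i j : nat) : nat -> nat :=
  fun n => if n == n1 then i else if n == n2 then j else 0%N.

Lemma gfun_inb X n1 n2 i j : (i < tdim X n1)%N -> (j < tdim X n2)%N ->
  inbounds X (gfun n1 n2 i j).
Proof.
move=> Hi Hj n Hn; rewrite /gfun; case: eqP => [->//|_]; case: eqP => [->//|_].
exact: tdim_ge1.
Qed.

End Aux.

Lemma qzc6 (R : realType) (r : tensor R -> nat)
  (H1a : forall X, r X = 0%N <-> is_zero_tensor X)
  (H1b : forall X, r X = 1%N <-> is_rank_one X)
  (H3 : forall X n1 n2 (A : 'M[R]_(tdim X n1, tdim X n2)),
     (n1 < n2)%N -> (n2 < tord X)%N ->
     (1 < tdim X n1)%N -> (1 < tdim X n2)%N ->
     (forall n, (n < tord X)%N -> n != n1 -> n != n2 -> (tdim X n <= 1)%N) ->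
     (forall (i : 'I_(tdim X n1)) (j : 'I_(tdim X n2)),
        A i j = tentry X (fun n => if n == n1 then nat_of_ord i
                                   else if n == n2 then nat_of_ord j else 0%N)) ->
     r X = \rank A)
  (H4 : forall X, ~ is_zero_tensor X -> ~ is_rank_one X ->
     (3 <= count (fun k => 1 < k)%N (tsz X))%N ->
     r X = (\max_(k <- tsz X) k)%N) X Y :
  is_subtensor Y X -> (r Y <= r X)%N.
Proof.
move=> S.
case: (classic (is_zero_tensor Y)) => [Z|NZ]; first by rewrite (proj2 (H1a Y) Z).
have NZX := sub_nonzero S NZ.
case: (classic (is_rank_one Y)) => [R1|NR1].
  rewrite (proj2 (H1b Y) R1) lt0n; apply/eqP => /H1a; exact: NZX.
have NR1X : ~ is_rank_one X by move=> h; apply: NR1; exact: sub_rank1 S NZ h.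
have Sc := S; case: Sc => E [sel [Hs He]].
have Hs2 : forall n, (n < tord X)%N -> forall j, (j < tdim Y n)%N -> (sel n j < tdim X n)%N.
  by move=> n Hn; case: (Hs n Hn).
have Hd := sub_dim S.
have szE : size (tsz Y) = size (tsz X) by exact: E.
have maxYX : (\max_(k <- tsz Y) k <= \max_(k <- tsz X) k)%N.
  apply: max_mono => // n Hn; apply: Hd; by rewrite -E.
have [p [Hp p0 Bp]] := big_other (tord_gt0 Y) NZ NR1.
have [q [Hq qp Bq]] := big_other Hp NZ NR1.
suff core : forall n1 n2, (n1 < n2)%N -> (n2 < tord Y)%N -> (1 < tdim Y n1)%N ->
     (1 < tdim Y n2)%N -> (r Y <= r X)%N.
  case: (ltngtP p q) => [pq|qp'|pq]; first exact: core pq Hq Bp Bq.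
    exact: core qp' Hp Bq Bp.
  by move: qp; rewrite pq eqxx.
move=> n1 n2 n12 Hn2 B1 B2.
have Hn1 : (n1 < tord Y)%N := ltn_trans n12 Hn2.
have ne12 : n1 != n2 by rewrite ltn_eqF.
have BX1 : (1 < tdim X n1)%N by apply: leq_trans B1 (Hd _ _); rewrite -E.
have BX2 : (1 < tdim X n2)%N by apply: leq_trans B2 (Hd _ _); rewrite -E.
case: (classic (exists n3, [/\ (n3 < tord Y)%N, n3 != n1, n3 != n2 & (1 < tdim Y n3)%N])).
  case=> n3 [Hn3 ne1 ne2 B3].
  have BX3 : (1 < tdim X n3)%N by apply: leq_trans B3 (Hd _ _); rewrite -E.
  rewrite (H4 Y NZ NR1) ?(H4 X NZX NR1X) //.
    by apply: (count3 (a:=n1) (b:=n2) (c:=n3)) => //; rewrite -?szE // eq_sym.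
  by apply: (count3 (a:=n1) (b:=n2) (c:=n3)) => //; rewrite eq_sym.
move=> NoY.
have HY : forall n, (n < tord Y)%N -> n != n1 -> n != n2 -> (tdim Y n <= 1)%N.
  move=> n Hn a b; rewrite leqNgt; apply/negP => Bn; apply: NoY; by exists n.
pose AY := \matrix_(i < tdim Y n1, j < tdim Y n2) tentry Y (gfun n1 n2 i j).
rewrite (H3 Y n1 n2 AY n12 Hn2 B1 B2 HY); last by move=> i j; rewrite mxE.
have rkY : (\rank AY <= \max_(k <- tsz X) k)%N.
  apply: leq_trans (rank_leq_row AY) _; apply: leq_trans maxYX; exact: le_max.
case: (classic (exists n3, [/\ (n3 < tord X)%N, n3 != n1, n3 != n2 & (1 < tdim X n3)%N])).
  case=> n3 [Hn3 ne1 ne2 B3].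
  rewrite (H4 X NZX NR1X) //.
  by apply: (count3 (a:=n1) (b:=n2) (c:=n3)) => //; rewrite -?szE // eq_sym.
move=> NoX.
have HX : forall n, (n < tord X)%N -> n != n1 -> n != n2 -> (tdim X n <= 1)%N.
  move=> n Hn a b; rewrite leqNgt; apply/negP => Bn; apply: NoX; by exists n.
have Hn2X : (n2 < tord X)%N by rewrite -E.
pose AX := \matrix_(i < tdim X n1, j < tdim X n2) tentry X (gfun n1 n2 i j).
rewrite (H3 X n1 n2 AX n12 Hn2X BX1 BX2 HX); last by move=> i j; rewrite mxE.
have Hn1X : (n1 < tord X)%N by rewrite -E.
pose fi := fun i : 'I_(tdim Y n1) => Ordinal (Hs2 n1 Hn1X i (ltn_ord i)).
pose fj := fun j : 'I_(tdim Y n2) => Ordinal (Hs2 n2 Hn2X j (ltn_ord j)).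
have -> : AY = mxsub fi fj AX.
  apply/matrixP => i j; rewrite !mxE He; last exact: gfun_inb.
  apply: tentry_ext => n Hn; rewrite /gfun /=.
  case: eqP => [->//|/eqP a]; case: eqP => [->//|/eqP b].
  have Hn' : (n < tord Y)%N by rewrite E.
  have := Hs2 n Hn 0%N (tdim_ge1 Hn'); have := HX n Hn a b.
  move=> u v; have := leq_trans v u; rewrite ltnS leqn0 => /eqP //.
exact: rank_mxsub.
Qed.

Lemma rank_id (F : fieldType) d1 d2 M (A : 'M[F]_(d1, d2)) : d1 = M -> d2 = M ->
  (forall (i : 'I_d1) (j : 'I_d2), A i j = (nat_of_ord i == nat_of_ord j)%:R) -> \rank A = M.
Proof.
move=> E1 E2; subst; move=> HA.
have -> : A = 1%:M by apply/matrixP => i j; rewrite HA !mxE.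
exact: mxrank1.
Qed.

Lemma rank_cast (F : fieldType) d1 d2 e1 e2 (A' : 'M[F]_(d1, d2)) (A : 'M[F]_(e1, e2))
  (G : nat -> nat -> F) : d1 = e1 -> d2 = e2 ->
  (forall (i : 'I_d1) (j : 'I_d2), A' i j = G i j) ->
  (forall (i : 'I_e1) (j : 'I_e2), A i j = G i j) -> \rank A' = \rank A.
Proof.
move=> E1 E2; subst; move=> h1 h2; congr mxrank; apply/matrixP => i j; by rewrite h1 h2.
Qed.

Lemma iter_maxn M N : iter N.+1 (maxn M) 0%N = M.
Proof. elim: N => [|N IH]; first by rewrite /= maxn0. by rewrite iterS IH maxnn. Qed.

Lemma qzc2 (R : realType) (r : tensor R -> nat)
  (H1b : forall X, r X = 1%N <-> is_rank_one X)
  (H3 : forall X n1 n2 (A : 'M[R]_(tdim X n1, tdim X n2)),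
     (n1 < n2)%N -> (n2 < tord X)%N ->
     (1 < tdim X n1)%N -> (1 < tdim X n2)%N ->
     (forall n, (n < tord X)%N -> n != n1 -> n != n2 -> (tdim X n <= 1)%N) ->
     (forall (i : 'I_(tdim X n1)) (j : 'I_(tdim X n2)),
        A i j = tentry X (fun n => if n == n1 then nat_of_ord i
                                   else if n == n2 then nat_of_ord j else 0%N)) ->
     r X = \rank A)
  (H4 : forall X, ~ is_zero_tensor X -> ~ is_rank_one X ->
     (3 <= count (fun k => 1 < k)%N (tsz X))%N ->
     r X = (\max_(k <- tsz X) k)%N) X M N :
  (2 <= N)%N -> is_identity_tensor X M N -> r X = M.
Proof.
move=> HN [Hsz Hent].
have tordE : tord X = N by rewrite /tord Hsz size_nseq.
have tdimE : forall n, (n < N)%N -> tdim X n = M.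
  by move=> n Hn; rewrite /tdim Hsz nth_nseq Hn.
have HN0 : (0 < N)%N by apply: leq_trans HN.
have HM : (1 <= M)%N by rewrite -(tdimE 0%N HN0); apply: tdim_ge1; rewrite tordE.
have inb : forall f, (forall n, (n < N)%N -> (f n < M)%N) -> inbounds X f.
  by move=> f Hf n; rewrite tordE => Hn; rewrite tdimE //; apply: Hf.
have f0inb : inbounds X (fun _ => 0%N) by apply: inb.
have f0E : tentry X (fun _ => 0%N) = 1 by rewrite Hent //; case: forallP.
have NZ : ~ is_zero_tensor X by move/zeroE => /(_ _ f0inb); rewrite f0E; apply/eqP; exact: oner_neq0.
case: (ltnP 1 M) => [M2|M1].
  have HN1 : (1 < N)%N by [].
  have NR1 : ~ is_rank_one X.
    case/rank1E => a [_ Hp].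
    have f1inb : inbounds X (fun _ => 1%N) by apply: inb.
    have f1E : tentry X (fun _ => 1%N) = 1 by rewrite Hent //; case: forallP.
    pose f2 := fun n : nat => if n == 0%N then 0%N else 1%N.
    have f2inb : inbounds X f2 by apply: inb => n _; rewrite /f2; case: eqP.
    have f2E : tentry X f2 = 0.
      rewrite Hent //; case: forallP => // /(_ (Ordinal HN1)).
      by rewrite /f2.
    have P0 := Hp _ f0inb; rewrite f0E in P0.
    have P1 := Hp _ f1inb; rewrite f1E in P1.
    have P2 := Hp _ f2inb; rewrite f2E in P2.
    have /prodf_neq0 N0 : \prod_(n < tord X) a n 0%N != 0 by rewrite -P0 oner_neq0.
    have /prodf_neq0 N1 : \prod_(n < tord X) a n 1%N != 0 by rewrite -P1 oner_neq0.
    have : \prod_(n < tord X) a n (f2 n) != 0.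
      apply/(prodf_neq0 _ (fun n : 'I_(tord X) => a n (f2 n))) => n _; rewrite /f2; case: ifP => _; [exact: N0 | exact: N1].
    by rewrite -P2 eqxx.
  case: (ltnP 2 N) => [N3|N2].
    rewrite (H4 X NZ NR1); last by rewrite Hsz count_nseq M2 mul1n.
    by rewrite Hsz big_nseq -(prednK HN0) iter_maxn.
  have N2' : N = 2%N by apply/eqP; rewrite eqn_leq N2 HN.
  have t2 : (1 < tord X)%N by rewrite tordE.
  pose A := \matrix_(i < tdim X 0, j < tdim X 1) tentry X (gfun 0 1 i j).
  rewrite (H3 X 0 1 A) //; last by move=> i j; rewrite mxE.
  - apply: rank_id; rewrite ?tdimE //.
    move=> i j; rewrite mxE Hent; last by apply: gfun_inb.
    rewrite /gfun /=.
    case: forallP => [H|H].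
      by have := H (Ordinal HN1); rewrite /= => /eqP ->; rewrite eqxx.
    case: eqP => // E; exfalso; apply: H => n; case: n => m Hm; move: Hm; rewrite N2'.
    by case: m => [|[|m]] //= _; rewrite E.
  - by rewrite tdimE.
  - by rewrite tdimE.
  - by move=> n; rewrite tordE N2'; case: n => [|[|n]].
have M1' : M = 1%N by apply/eqP; rewrite eqn_leq M1 HM.
rewrite M1'; apply/H1b; apply: (@vec_rank1 _ X 0%N); rewrite ?tordE // => n Hn _.
by rewrite tdimE ?M1' // -tordE.
Qed.

Lemma qzc3 (R : realType) (r : tensor R -> nat)
  (H1a : forall X, r X = 0%N <-> is_zero_tensor X)
  (H1b : forall X, r X = 1%N <-> is_rank_one X)
  (H3 : forall X n1 n2 (A : 'M[R]_(tdim X n1, tdim X n2)),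
     (n1 < n2)%N -> (n2 < tord X)%N ->
     (1 < tdim X n1)%N -> (1 < tdim X n2)%N ->
     (forall n, (n < tord X)%N -> n != n1 -> n != n2 -> (tdim X n <= 1)%N) ->
     (forall (i : 'I_(tdim X n1)) (j : 'I_(tdim X n2)),
        A i j = tentry X (fun n => if n == n1 then nat_of_ord i
                                   else if n == n2 then nat_of_ord j else 0%N)) ->
     r X = \rank A) X I1 I2 k (A : 'M[R]_(I1, I2)) :
  tsz X = [:: I1, I2 & nseq k 1%N] ->
  (forall (i : 'I_I1) (j : 'I_I2),
     A i j = tentry X (fun n => if n == 0%N then nat_of_ord i
                                else if n == 1%N then nat_of_ord j else 0%N)) ->
  r X = \rank A.
Proof.
move=> Hsz HA.
have tordE : tord X = k.+2 by rewrite /tord Hsz /= size_nseq.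
have d0 : tdim X 0 = I1 by rewrite /tdim Hsz.
have d1 : tdim X 1 = I2 by rewrite /tdim Hsz.
have dS : forall n, (n < k.+2)%N -> (1 < n)%N -> tdim X n = 1%N.
  by move=> [|[|n]] //; rewrite /tdim Hsz /= nth_nseq ltnS ltnS => ->.
have I1p : (1 <= I1)%N by rewrite -d0; apply: tdim_ge1; rewrite tordE.
have I2p : (1 <= I2)%N by rewrite -d1; apply: tdim_ge1; rewrite tordE.
case: (classic (is_zero_tensor X)) => [Z|NZ].
  rewrite (proj2 (H1a X) Z); have -> : A = 0 by apply/matrixP => i j; rewrite HA tentry_zero // mxE.
  by rewrite mxrank0.
have Anz : A != 0.
  case: (nonzeroE NZ) => f Hf Hnz; apply/negP => /eqP A0.
  have f0 : (f 0%N < I1)%N by rewrite -d0; apply: Hf; rewrite tordE.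
  have f1 : (f 1%N < I2)%N by rewrite -d1; apply: Hf; rewrite tordE.
  move: Hnz; rewrite (_ : tentry X f = A (Ordinal f0) (Ordinal f1)); first by rewrite A0 mxE eqxx.
  rewrite HA; apply: tentry_ext => n Hn /=; case: eqP => [->//|a]; case: eqP => [->//|b].
  have := Hf n Hn; rewrite dS -?tordE //; first by rewrite ltnS leqn0 => /eqP.
  by case: n a b Hn => [|[|n]].
have rk1 : forall m, (m <= 1)%N -> m = I1 \/ m = I2 -> \rank A = 1%N.
  move=> m m1 Em; apply/eqP; rewrite eqn_leq lt0n mxrank_eq0 Anz andbT.
  case: Em => E; rewrite E in m1; [exact: leq_trans (rank_leq_row A) m1 | exact: leq_trans (rank_leq_col A) m1].
have oth : forall n, (n < tord X)%N -> (1 < n)%N -> (tdim X n <= 1)%N.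
  by move=> n Hn Hn1; rewrite dS // -tordE.
case: (ltnP 1 I1) => [B1|S1]; last first.
  rewrite (rk1 I1) //; last by left.
  apply/H1b; apply: (@vec_rank1 _ X 1%N); rewrite ?tordE // => n Hn ne.
  by case: n Hn ne => [|[|n]] Hn ne //; [rewrite d0 | rewrite dS].
case: (ltnP 1 I2) => [B2|S2]; last first.
  rewrite (rk1 I2) //; last by right.
  apply/H1b; apply: (@vec_rank1 _ X 0%N); rewrite ?tordE // => n Hn ne.
  by case: n Hn ne => [|[|n]] Hn ne //; [rewrite d1 | rewrite dS].
pose A' := \matrix_(i < tdim X 0, j < tdim X 1) tentry X (gfun 0 1 i j).
rewrite (H3 X 0 1 A') //.
- apply: (rank_cast (G := fun i j => tentry X (gfun 0 1 i j))) => //.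
  by move=> i j; rewrite mxE.
- by rewrite tordE.
- by rewrite d0.
- by rewrite d1.
- by move=> n Hn a b; apply: oth => //; case: n a b {Hn} => [|[|n]].
- by move=> i j; rewrite mxE.
Qed.

Theorem proposition3p9 (R : realType) (r : tensor R -> nat)
  (H1a : forall X, r X = 0%N <-> is_zero_tensor X)
  (H1b : forall X, r X = 1%N <-> is_rank_one X)
  (H2 : forall X Y, tsim X Y -> r X = r Y)
  (H3 : forall X n1 n2 (A : 'M[R]_(tdim X n1, tdim X n2)),
     (n1 < n2)%N -> (n2 < tord X)%N ->
     (1 < tdim X n1)%N -> (1 < tdim X n2)%N ->
     (forall n, (n < tord X)%N -> n != n1 -> n != n2 -> (tdim X n <= 1)%N) ->
     (forall (i : 'I_(tdim X n1)) (j : 'I_(tdim X n2)),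
        A i j = tentry X (fun n => if n == n1 then nat_of_ord i
                                   else if n == n2 then nat_of_ord j else 0%N)) ->
     r X = \rank A)
  (H4 : forall X, ~ is_zero_tensor X -> ~ is_rank_one X ->
     (3 <= count (fun k => 1 < k)%N (tsz X))%N ->
     r X = (\max_(k <- tsz X) k)%N) :
  is_QZC r.
Proof.
split; first exact: H1a.
split; first exact: H1b.
split; first by move=> X M N; exact: qzc2 H1b H3 H4 X M N.
split; first by move=> X I1 I2 k A; exact: qzc3 H1a H1b H3 X I1 I2 k A.
split; first by move=> X Y alpha Ha Hs; symmetry; apply: H2; exact: tsim_scale Ha Hs.
split; first by move=> X Y Hp; symmetry; apply: H2; exact: tsim_perm.
by move=> X Y S; exact: qzc6 H1a H1b H3 H4 X Y S.
Qed.
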